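(* Assume (R), assume that for every $\nu=1,\dots,d$ the growth-of-sum-moment condition (M) holds with constant $C_\nu$ (for $\gamma=2$), and that $T\ge p$ and $p=o(T)$ if $0\le\eta\le1/2$, respectively $p^{2\eta}=o(T)$ if $\eta>1/2$. Then there is a constant $K$ such that for every $\delta>0$ \[ \mathbb P\big(\|\widehat{\mathbb B}_T-\mathbb B\|_F>\delta\big)\le\frac{K^2}{\delta^2}\Big(\sum_{\nu=1}^dC_\nu\Big)\frac pT. \]
   Context: Setting: the dimension $p=p_T$ may grow with $T$. Regressors $\mathbf x_t\in\mathbb R^p$, responses $\mathbf Y_t\in\mathbb R^d$ with $Y_t^{(\nu)}=\mathbf x_t^\top\boldsymbol\beta_\nu+\epsilon_t^{(\nu)}$, $t=1,\dots,T$, $\nu=1,\dots,d$; $\mathbb B=(\boldsymbol\beta_1,\dots,\boldsymbol\beta_d)\in\mathbb R^{p\times d}$. $\mathbb P,\mathbb E$ are conditional on the regressors. $\mathbb X_T=(\mathbf x_1,\dots,\mathbf x_T)^\top$ has full rank, $\mathbf Y_T^{(\nu)}=(Y_1^{(\nu)},\dots,Y_T^{(\nu)})^\top$, $\widehat{\boldsymbol\beta}_{T\nu}=(\mathbb X_T^\top\mathbb X_T)^{-1}\mathbb X_T^\top\mathbf Y_T^{(\nu)}$, $\widehat{\mathbb B}_T=(\widehat{\boldsymbol\beta}_{T1},\dots,\widehat{\boldsymbol\beta}_{Td})$, and $\|\cdot\|_F$ is the Frobenius norm. (R): regressors bounded; there exist positive definite $\Sigma_{\mathbf x}$, constants $\eta\ge0$,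 $C<\infty$ and a compact interval $A\subset(0,\infty)$, independent of $T,p$, with $\|T^{-1}\sum_t\mathbf x_t\mathbf x_t^\top-\Sigma_{\mathbf x}\|_2\le Cp^\eta/\sqrt T$ and $\operatorname{spec}(T^{-1}\mathbb X_T^\top\mathbb X_T)\subset A$. (M) for $\nu$: there are $C_\nu<\infty$ and $\gamma'\ge2$ with $\sup_{j\ge1}\mathbb E|\sum_{t=1}^Nx_{tj}\epsilon_t^{(\nu)}|^\gamma\le C_\nu N^{\gamma/2}$ for all $2\le\gamma\le\gamma'$, $N\in\mathbb N$. *)

(* Defs.v *)
From HB Require Import structures.
From mathcomp Require Import all_boot all_order all_algebra.
From mathcomp Require Import all_classical all_reals all_analysis.
Set Implicit Arguments. Unset Strict Implicit. Unset Printing Implicit Defensive.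
Import Order.TTheory GRing.Theory Num.Theory.
Local Open Scope ring_scope.
Local Open Scope classical_set_scope.

Definition vnorm (R : realType) (n : nat) (v : 'cV[R]_n) : R :=
  Num.sqrt (\sum_(i < n) v i ord0 ^+ 2).

Definition frob (R : realType) (m n : nat) (M : 'M[R]_(m, n)) : R :=
  Num.sqrt (\sum_(i < m) \sum_(j < n) M i j ^+ 2).

Definition opnorm2 (R : realType) (m n : nat) (M : 'M[R]_(m, n)) : R :=
  sup [set vnorm (M *m v) | v in [set v : 'cV[R]_n | vnorm v <= 1]].

Definition posdef (R : realType) (n : nat) (S : 'M[R]_n) : Prop :=
  S^T = S /\ forall v : 'cV[R]_n, v != 0 -> 0 < (v^T *m S *m v) ord0 ord0.

(* design matrix X_T = (x_1,...,x_T)^T, rows indexed by t = 0..T-1 *)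
Definition design (R : realType) (T p : nat) (x : nat -> 'I_p -> R) : 'M[R]_(T, p) :=
  \matrix_(t < T, j < p) x t j.

Definition ols (R : realType) (T p d : nat) (X : 'M[R]_(T, p)) (Y : 'M[R]_(T, d))
  : 'M[R]_(p, d) := invmx (X^T *m X) *m X^T *m Y.

(* Main.v *)
Require Import Defs.
From HB Require Import structures.
From mathcomp Require Import all_boot all_order all_algebra.
From mathcomp Require Import all_classical all_reals all_analysis.
From mathcomp Require Import complex spectral sesquilinear ring.
From mathcomp Require Import measurable_realfun lebesgue_integral.
Import Order.TTheory GRing.Theory Num.Theory numFieldNormedType.Exports.
Local Open Scope ring_scope.
Local Open Scope classical_set_scope.

Module KeyM.
Import Num.Def.
Local Open Scope sesquilinear_scope.
Section Key.
Variable R : realType.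
Local Notation C := (Num.ClosedField.sort (R[i] : numClosedFieldType)).
Local Notation f := (real_complex R).

Lemma f_real (x : R) : (f x : C) \is Num.real.
Proof. by rewrite complex_real. Qed.

Lemma conj_f (x : R) : ((f x : C)^*)%R = f x.
Proof. exact/conj_Creal/f_real. Qed.

Lemma sq_map n (v : 'cV[R]_n) :
  ((((map_mx f v : 'cV[C]_n)) ^t conjC) *m (map_mx f v : 'cV[C]_n)) 0 0 = f (\sum_i v i 0 ^+ 2).
Proof.
rewrite !mxE rmorph_sum; apply: eq_bigr => k _.
by rewrite !mxE conj_f rmorphXn expr2.
Qed.


Lemma fM (x y : R) : (f (x * y) : C) = f x * f y.
Proof. exact: rmorphM. Qed.

Lemma fX2 (x : R) : (f (x ^+ 2) : C) = f x ^+ 2.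
Proof. exact: rmorphXn. Qed.

Lemma real_eig n (A : 'M[R]_n) (r : R) :
  eigenvalue (map_mx f A) (f r) -> eigenvalue A r.
Proof.
by rewrite !eigenvalue_root_char -map_char_poly fmorph_root.
Qed.

Lemma key n (A : 'M[R]_n) (c : R) : A^T = A -> 0 <= c ->
  (forall lam, eigenvalue A lam -> c <= lam) ->
  forall u : 'cV[R]_n, c ^+ 2 * \sum_i (u i 0) ^+ 2 <= \sum_i ((A *m u) i 0) ^+ 2.
Proof.
move=> sA c0 eigA u.
set Ac : 'M[C]_n := map_mx f A.
have herm : Ac \is hermsymmx.
  apply/sesquiP; rewrite expr0 scale1r; apply/matrixP => i j.
  by rewrite !mxE /= conj_f -[in LHS]sA mxE.
have /orthomx_spectralP HA := hermitian_normalmx herm.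
set P := spectralmx Ac in HA; set D := spectral_diag Ac in HA.
have Pu : P \is unitarymx by exact: spectral_unitarymx.
have PPt : P *m P ^t conjC = 1%:M by apply/unitarymxP.
have PtP : P ^t conjC *m P = 1%:M by apply: mulmx1C.
have iP : invmx P = P ^t conjC by rewrite invmx_unitary.
have Dreal : D \is a realmx by apply: hermitian_spectral_diag_real.
have Dge k : f c <= D 0 k.
  have /complex_realP [r Dr] : D 0 k \is Num.real by move/mxOverP: Dreal; apply.
  rewrite Dr lecR; apply: eigA; apply: real_eig; rewrite -Dr.
  apply/eigenvalueP; exists (row k P).
    rewrite -row_mul -/Ac {1}HA iP !mulmxA PPt mul1mx mul_diag_mx.
    by apply/rowP => j; rewrite !mxE.
  apply/eqP => /(congr1 (mulmx^~ (P ^t conjC))).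
  rewrite -row_mul PPt mul0mx => /rowP /(_ k).
  by rewrite !mxE eqxx /= => /eqP; rewrite oner_eq0.
set uc : 'cV[C]_n := map_mx f u.
have hermE : Ac ^t conjC = Ac.
  by apply/matrixP => i j; rewrite !mxE /= conj_f -[in RHS]sA mxE.
have eq1 : (f (\sum_i ((A *m u) i 0) ^+ 2) : C) = (uc ^t conjC *m Ac *m Ac *m uc) 0 0.
  rewrite -sq_map map_mxM -/Ac -/uc trmx_mul map_mxM hermE.
  by rewrite !mulmxA.
set w := P *m uc.
have eq2 : (f (\sum_i (u i 0) ^+ 2) : C) = (w ^t conjC *m w) 0 0.
  rewrite -sq_map -/uc /w trmx_mul map_mxM.
  by rewrite -mulmxA (mulmxA _ P) PtP mul1mx.
have eq3 : uc ^t conjC *m Ac *m Ac *m uc =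
           w ^t conjC *m diag_mx D *m diag_mx D *m w.
  have HA' : Ac = P ^t conjC *m diag_mx D *m P by rewrite -iP; exact: HA.
  rewrite /w trmx_mul map_mxM HA' !mulmxA.
  rewrite -(mulmxA (uc ^t conjC *m P ^t conjC *m diag_mx D) P (P ^t conjC)) PPt mulmx1.
  reflexivity.
have : (f (c ^+ 2 * \sum_i (u i 0) ^+ 2) : C) <= (f (\sum_i ((A *m u) i 0) ^+ 2) : C).
  clearbody w.
  have e4 : (w ^t conjC *m diag_mx D *m diag_mx D *m w) 0 0 =
     \sum_k (D 0 k * D 0 k) * (conjC (w k 0) * w k 0).
    rewrite !mul_mx_diag mxE; apply: eq_bigr => k _; rewrite !mxE /=.
    ring.
  have e5 : (w ^t conjC *m w) 0 0 = \sum_k (conjC (w k 0) * w k 0).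
    by rewrite mxE; apply: eq_bigr => k _; rewrite !mxE.
  rewrite eq1 eq3 fM eq2 e4 e5 mulr_sumr; apply: ler_sum => k _.
  have wge : 0 <= conjC (w k 0) * w k 0 by rewrite mulrC mul_conjC_ge0.
  have fc0 : 0 <= f c by rewrite ler0c.
  rewrite fX2 expr2; apply: ler_wpM2r => //.
  by apply: ler_pM => //; apply: Dge.
by rewrite lecR.
Qed.
End Key.
End KeyM.
Import KeyM.
Section Aux.
Variables (R : realType) (dsp : measure_display) (Omega : measurableType dsp).

Lemma mfun_sum (I : Type) (s : seq I) (g : I -> Omega -> R) :
  (forall i, measurable_fun setT (g i)) ->
  measurable_fun setT (fun w => \sum_(i <- s) g i w).
Proof.
move=> mg; elim: s => [|i s IH].
  by under eq_fun do rewrite big_nil; exact: measurable_cst.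
under eq_fun do rewrite big_cons.
exact: measurable_realfun.measurable_funD.
Qed.

Lemma mat_key n d (S : 'M[R]_n) (c : R) : S^T = S -> 0 <= c ->
  (forall lam, eigenvalue S lam -> c <= lam) ->
  forall M : 'M[R]_(n, d),
  c ^+ 2 * \sum_i \sum_j (M i j) ^+ 2 <= \sum_i \sum_j ((S *m M) i j) ^+ 2.
Proof.
move=> sS c0 eS M.
rewrite (exchange_big _ _ _ _ _ (fun i j => M i j ^+ 2)).
rewrite (exchange_big _ _ _ _ _ (fun i j => (S *m M) i j ^+ 2)).
rewrite mulr_sumr; apply: ler_sum => j _.
have := @key R _ _ _ sS c0 eS (col j M).
have -> : \sum_i (col j M i 0) ^+ 2 = \sum_i M i j ^+ 2.
  by apply: eq_bigr => i _; rewrite mxE.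
have -> : \sum_i ((S *m col j M) i 0) ^+ 2 = \sum_i (S *m M) i j ^+ 2.
  apply: eq_bigr => i _; rewrite !mxE; congr (_ ^+ 2).
  by apply: eq_bigr => k _; rewrite mxE.
by [].
Qed.
End Aux.
Theorem corollary1 (R : realType) (dsp : measure_display) (Omega : measurableType dsp)
  (P : probability Omega R) (d : nat) (p : nat -> nat)
  (x : forall T : nat, nat -> 'I_(p T) -> R)
  (B : forall T : nat, 'M[R]_(p T, d))
  (eps : nat -> 'I_d -> Omega -> R)
  (Sigma : forall T : nat, 'M[R]_(p T))
  (eta Cr a b Cx : R) (C : 'I_d -> R) :
  (* (R) *)
  (forall T t j, `|x T t j| <= Cx) ->
  (forall T, posdef (Sigma T)) ->
  0 <= eta -> 0 < a -> a <= b ->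
  (forall T : nat, (0 < T)%N ->
     opnorm2 ((T%:R)^-1 *: ((design T (x T))^T *m design T (x T)) - Sigma T)
       <= Cr * (p T)%:R `^ eta / Num.sqrt T%:R) ->
  (forall T : nat, (0 < T)%N -> forall lam : R,
     eigenvalue ((T%:R)^-1 *: ((design T (x T))^T *m design T (x T))) lam ->
     a <= lam <= b) ->
  (forall T : nat, (0 < T)%N -> \rank (design T (x T)) = p T) ->
  (* errors are random variables *)
  (forall t nu, measurable_fun setT (eps t nu)) ->
  (* (M) with gamma = 2, for every nu *)
  (forall T : nat, (0 < T)%N -> forall (nu : 'I_d) (j : 'I_(p T)) (N : nat),
     (\int[P]_w ((`|\sum_(t < N) x T t j * eps t nu w| ^+ 2)%:E)
        <= (C nu * N%:R)%:E)%E) ->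
  (* growth conditions *)
  (forall T : nat, (0 < T)%N -> (p T <= T)%N) ->
  (eta <= 2^-1 -> (fun T : nat => (p T)%:R / T%:R : R) @ \oo --> (0 : R)) ->
  (2^-1 < eta -> (fun T : nat => (p T)%:R `^ (2 * eta) / T%:R : R) @ \oo --> (0 : R)) ->
  exists K : R, forall T : nat, (0 < T)%N -> forall delta : R, 0 < delta ->
    (P [set w | (delta < frob (ols (design T (x T))
                   (\matrix_(t < T, nu < d) (\sum_(j < p T) x T t j * B T j nu + eps t nu w))
                   - B T))%R]
      <= (K ^+ 2 / delta ^+ 2 * (\sum_(nu < d) C nu) * ((p T)%:R / T%:R))%:E)%E.
Proof.
move=> Hx Hsig eta0 a0 ab Hop Heig Hrank Heps HM Hpt H1 H2.
exists a^-1 => T T0 delta d0.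
set n := p T.
set X := design T (x T).
set S := X^T *m X.
have T0' : (0 : R) < T%:R by rewrite ltr0n.
have sS : S^T = S by rewrite /S trmx_mul trmxK.
have eigS : forall lam, eigenvalue S lam -> a * T%:R <= lam.
  move=> lam /eigenvalueP [v vS v0].
  have : eigenvalue ((T%:R)^-1 *: (X^T *m X)) ((T%:R)^-1 * lam).
    apply/eigenvalueP; exists v => //.
    by rewrite -scalemxAr -/S vS scalerA mulrC.
  move/(Heig T T0)/andP => [+ _].
  by rewrite ler_pdivlMl // mulrC.
have aT0 : 0 <= a * T%:R by rewrite mulr_ge0 // ltW.
have kS := @mat_key R _ d _ _ sS aT0 eigS.
have Su : S \in unitmx.
  rewrite unitmxE unitfE; apply/negP => /det0P [v v0 vS].
  have : eigenvalue S 0 by apply/eigenvalueP; exists v => //; rewrite vS scale0r.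
  move/eigS; rewrite leNgt => /negP; apply.
  by rewrite mulr_gt0.
set G := invmx S.
pose E (w : Omega) : 'M[R]_(T, d) := \matrix_(t < T, nu < d) eps t nu w.
have Ydef w : \matrix_(t < T, nu < d) (\sum_(j < p T) x T t j * B T j nu + eps t nu w)
    = X *m B T + E w.
  apply/matrixP => t nu; rewrite !mxE; congr (_ + _).
  by apply: eq_bigr => j _; rewrite !mxE.
have diffE w : ols X (\matrix_(t < T, nu < d) (\sum_(j < p T) x T t j * B T j nu + eps t nu w)) - B T
    = (G *m X^T) *m E w.
  rewrite Ydef /ols -/S -/G mulmxDr.
  rewrite !mulmxA -(mulmxA G) -/S mulVmx // mul1mx.
  by rewrite addrC addKr.
have mE m (K : 'M[R]_(m, T)) i j : measurable_fun setT (fun w => (K *m E w) i j).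
  under eq_fun => w do rewrite mxE.
  apply: mfun_sum => t.
  under eq_fun => w do rewrite mxE.
  apply: measurable_realfun.measurable_funM => //.
have mSq m (K : 'M[R]_(m, T)) :
    measurable_fun setT (fun w => \sum_i \sum_j ((K *m E w) i j) ^+ 2).
  apply: mfun_sum => i; apply: mfun_sum => j.
  exact/measurable_realfun.measurable_funX/mE.
pose K1 := G *m X^T.
pose F : Omega -> R := fun w => \sum_i \sum_j ((K1 *m E w) i j) ^+ 2.
pose Q : Omega -> R := fun w => \sum_i \sum_j ((X^T *m E w) i j) ^+ 2.
have FQ w : (a * T%:R) ^+ 2 * F w <= Q w.
  have := kS (G *m (X^T *m E w)).
  by rewrite mulKVmx // /F /K1 -mulmxA.
have F0 w : 0 <= F w by apply: sumr_ge0 => i _; apply: sumr_ge0 => j _; exact: sqr_ge0.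
have Q0 w : 0 <= Q w by apply: sumr_ge0 => i _; apply: sumr_ge0 => j _; exact: sqr_ge0.
have setE : [set w | delta < frob (ols X
     (\matrix_(t < T, nu < d) (\sum_(j < p T) x T t j * B T j nu + eps t nu w)) - B T)]
    = [set w | delta ^+ 2 < F w].
  have eqv y : (delta < Num.sqrt y) = (delta ^+ 2 < y).
    by rewrite -{1}(ger0_norm (ltW d0)) -sqrtr_sqr !ltNge ler_sqrt // sqr_ge0.
  by apply/seteqP; split => w /=; rewrite diffE /frob -/K1 eqv.
rewrite setE.
set A := [set w | delta ^+ 2 < F w].
have mA : measurable A.
  have := mSq _ K1 measurableT _ (measurable_itv (`]delta ^+ 2, +oo[)%O).
  rewrite setTI; congr measurable; apply/seteqP; split => w /=.
    by rewrite in_itv /= andbT.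
  by rewrite in_itv /= andbT.
have mQ : measurable_fun setT (fun w => (Q w)%:E).
  by apply/measurable_EFinP; exact: mSq.
pose c := delta ^+ 2 * (a * T%:R) ^+ 2.
have c0 : 0 < c by rewrite mulr_gt0 // exprn_gt0 // mulr_gt0.
have step1 : (c%:E * P A <= \int[P]_(w in A) (Q w)%:E)%E.
  rewrite -integral_cst //; apply: ge0_le_integral => //.
  - by move=> w _; rewrite lee_fin ltW.
  - exact: measurable_funTS.
  - move=> w Aw; rewrite lee_fin; apply: le_trans (FQ w).
    rewrite /c mulrC ler_wpM2l //; first exact: sqr_ge0.
    exact: ltW.
have step2 : (\int[P]_(w in A) (Q w)%:E <= \int[P]_w (Q w)%:E)%E.
  apply: ge0_subset_integral => //.
  by move=> w _; rewrite lee_fin.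
have intsum (I : finType) (g : I -> Omega -> R) :
    (forall i, measurable_fun setT (g i)) -> (forall i w, 0 <= g i w) ->
    (\int[P]_w (\sum_i g i w)%:E = \sum_i \int[P]_w (g i w)%:E)%E.
  move=> mg g0.
  under eq_integral => w _ do rewrite -sumEFin.
  apply: ge0_integral_sum => //.
    by move=> i; apply/measurable_EFinP; exact: mg.
  by move=> i w _; rewrite lee_fin.
have step3 : (\int[P]_w (Q w)%:E <= (n%:R * (T%:R * \sum_nu C nu))%:E)%E.
  rewrite /Q intsum; last 2 first.
  - move=> i; apply: mfun_sum => j.
    exact/measurable_realfun.measurable_funX/mE.
  - by move=> i w; apply: sumr_ge0 => j _; exact: sqr_ge0.
  have -> : (n%:R * (T%:R * \sum_nu C nu))%:E =
     (\sum_(i < n) \sum_(nu < d) (C nu * T%:R)%:E)%E.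
    rewrite (eq_bigr (fun i : 'I_n => (\sum_(nu < d) C nu * T%:R)%:E)); last first.
      by move=> i _; rewrite sumEFin.
    rewrite sumEFin sumr_const card_ord -mulr_suml mulr_natl.
    by rewrite mulrC.
  apply: lee_sum => i _.
  rewrite intsum; last 2 first.
  - by move=> j; exact/measurable_realfun.measurable_funX/mE.
  - by move=> j w; exact: sqr_ge0.
  apply: lee_sum => nu _.
  apply: le_trans (HM T T0 nu i T); rewrite le_eqVlt; apply/orP; left; apply/eqP.
  apply: eq_integral => w _; congr EFin.
  rewrite -real_normK ?num_real // !mxE; congr (`| _ | ^+ 2).
  by apply: eq_bigr => t _; rewrite !mxE.
have PAfin : P A \is a fin_num.
  by rewrite ge0_fin_numE ?measure_ge0 // (le_lt_trans (probability_le1 P mA)) ?ltry.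
have := le_trans step1 (le_trans step2 step3).
rewrite -(fineK PAfin) -EFinM !lee_fin => h.
have -> : a^-1 ^+ 2 / delta ^+ 2 * (\sum_(nu < d) C nu) * (n%:R / T%:R)
    = (n%:R * (T%:R * \sum_nu C nu)) / c.
  rewrite /c; field.
  by rewrite !pnatr_eq0 ?gt_eqF // -lt0n.
by rewrite ler_pdivlMr // mulrC.
Qed.
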